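(* Let $c>1$ and let $m\ge cn$. Then there exists a constant $d>0$ such that, for all sufficiently large $n$ and every fixed matrix $\mathbf B\in\mathbb{Z}_2^{m\times 2n}$, $H(\mathbf B\mathbf A)\le(1-d)mn$, where $\mathbf A\in\mathbb{Z}_2^{2n\times n}$ is a uniformly random full-rank isotropic matrix and $H$ denotes Shannon entropy (in bits).
   Context: Symplectic inner product on $\mathbb{Z}_2^{2n}$: $(\mathbf a,\mathbf b)\odot(\mathbf a',\mathbf b')=\mathbf a\cdot\mathbf b'+\mathbf a'\cdot\mathbf b\pmod2$. A uniformly random full-rank isotropic matrix in $\mathbb{Z}_2^{2n\times n}$ is uniform among matrices of column rank $n$ whose columns are pairwise symplectically orthogonal. *)

(* Defs.v *)
From Stdlib Require Import Reals.
From HB Require Import structures.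
From mathcomp Require Import all_boot all_order all_algebra.
From mathcomp Require Import Rstruct.
Set Implicit Arguments. Unset Strict Implicit. Unset Printing Implicit Defensive.
Import GRing.Theory Num.Theory.
Local Open Scope ring_scope.

(* Z_2 as the prime field 'F_2. Vectors of Z_2^{2n} are column vectors
   indexed by 'I_(n + n): the first n coordinates are a, the last n are b. *)

Definition sympl (n : nat) (u v : 'cV['F_2]_(n + n)) : 'F_2 :=
  \sum_(i < n) (u (lshift n i) 0 * v (rshift n i) 0
               + v (lshift n i) 0 * u (rshift n i) 0).

Definition isotropic (n : nat) (A : 'M['F_2]_(n + n, n)) : bool :=
  [forall i : 'I_n, forall j : 'I_n, sympl (col i A) (col j A) == 0].

Definition IsoFR (n : nat) : {set 'M['F_2]_(n + n, n)} :=
  [set A | (\rank A == n) && isotropic A].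

Definition prob_BA (m n : nat) (B : 'M['F_2]_(m, n + n)) (M : 'M['F_2]_(m, n)) : R :=
  (#|[set A in IsoFR n | B *m A == M]|%:R / #|IsoFR n|%:R)%R.

Definition log2 (x : R) : R := (ln x / ln 2)%R.

Definition entropy_BA (m n : nat) (B : 'M['F_2]_(m, n + n)) : R :=
  \sum_(M : 'M['F_2]_(m, n))
     (if prob_BA B M == 0 then 0 else - (prob_BA B M * log2 (prob_BA B M))).

(* Main.v *)
Require Import Defs.
From Stdlib Require Import Reals Lra.
From HB Require Import structures.
From mathcomp Require Import all_boot all_order all_algebra.
From mathcomp Require Import Rstruct.
From mathcomp Require Import zify ring lra.
Import GRing.Theory Num.Theory.
Local Open Scope ring_scope.

Module Aux.
Set Implicit Arguments. Unset Strict Implicit. Unset Printing Implicit Defensive.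
Local Notation F := 'F_2.

Lemma cardF : #|F| = 2%N.
Proof. by rewrite card_Fp. Qed.

Lemma card_sub k p m (U : 'M[F]_(p, m)) :
  #|[set X : 'M[F]_(k, m) | (X <= U)%MS]| = (2 ^ (k * \rank U))%N.
Proof.
have inj : injective (fun Y : 'M[F]_(k, \rank U) => Y *m row_base U).
  exact: row_free_inj (row_base_free U).
have -> : [set X : 'M[F]_(k, m) | (X <= U)%MS] =
          [set Y *m row_base U | Y in [set: 'M[F]_(k, \rank U)]].
  apply/setP => X; rewrite inE; apply/idP/imsetP.
    move=> sXU; exists (X *m pinvmx (row_base U)); first by rewrite inE.
    by rewrite mulmxKpV // eq_row_base.
  by case=> Y _ ->; rewrite -(eq_row_base U) submxMl.
by rewrite card_imset // cardsT card_mx cardF.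
Qed.

Lemma card_ker m n p (T : 'M[F]_(p, m)) :
  #|[set M : 'M[F]_(m, n) | T *m M == 0]| = (2 ^ (n * (m - \rank T)))%N.
Proof.
have -> : [set M : 'M[F]_(m, n) | T *m M == 0] =
   [set X^T | X in [set X : 'M[F]_(n, m) | (X <= kermx T^T)%MS]].
  apply/setP => M; rewrite inE; apply/idP/imsetP.
    move=> /eqP TM; exists M^T; last by rewrite trmxK.
    by rewrite inE sub_kermx -trmx_mul TM trmx0.
  case=> X; rewrite inE sub_kermx => /eqP XT ->.
  by rewrite -(trmxK T) -trmx_mul XT trmx0.
by rewrite card_imset ?card_sub ?mxrank_ker ?mxrank_tr //; exact: trmx_inj.
Qed.

Lemma rank_col_sub m n (v : 'rV[F]_n) (V : 'M[F]_(m, n)) :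
  (v <= V)%MS -> \rank (col_mx v V) = \rank V.
Proof.
move=> svV; rewrite -addsmxE.
by rewrite (addsmx_idPr svV).
Qed.

Lemma rank_col_nsub m n (v : 'rV[F]_n) (V : 'M[F]_(m, n)) :
  ~~ (v <= V)%MS -> \rank (col_mx v V) = (\rank V).+1.
Proof.
move=> nsvV; rewrite -addsmxE.
have le1 : (\rank (v + V)%MS <= (\rank V).+1)%N.
  apply: leq_trans (mxrank_adds_leqif v V) _.
  exact: (leq_add (rank_leq_row v) (leqnn _)).
have lt1 : (\rank V < \rank (v + V)%MS)%N.
  rewrite (ltn_leqif (mxrank_leqif_sup (addsmxSr v V))).
  by apply: contra nsvV; rewrite addsmx_sub => /andP[].
by apply/eqP; rewrite eqn_leq le1 lt1.
Qed.

Lemma card_setE (T : finType) (P : pred T) : #|[set x | P x]| = (\sum_x (P x : nat))%N.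
Proof.
by rewrite -sum1_card big_mkcond; apply: eq_bigr => x _; rewrite inE; case: (P x).
Qed.

Lemma sum_col_split (l m : nat) (f : 'M[F]_(1 + l, m) -> nat) :
  (\sum_(W : 'M[F]_(1 + l, m)) f W = \sum_(v : 'rV[F]_m) \sum_(V : 'M[F]_(l, m)) f (col_mx v V))%N.
Proof.
rewrite pair_big /=.
rewrite (reindex (fun p : 'rV[F]_m * 'M[F]_(l, m) => col_mx p.1 p.2)) //=.
exists (fun W => (usubmx W, dsubmx W)) => [[v V] _ | W _] /=.
  by rewrite col_mxKu col_mxKd.
by rewrite vsubmxK.
Qed.

Section Iso.
Variables (m : nat) (Q : 'M[F]_m).
Hypothesis symQ : Q^T = Q.

Definition isoQ l (V : 'M[F]_(l, m)) := V *m Q *m V^T == 0.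

Definition R0 := \rank (kermx Q).

Lemma card_stay l (V : 'M[F]_(l, m)) :
  (#|[set v : 'rV[F]_m | (v *m Q <= V *m Q)%MS]| <= 2 ^ (R0 + \rank (V *m Q)))%N.
Proof.
apply: (@leq_trans #|[set v : 'rV[F]_m | (v <= V + kermx Q)%MS]|).
  apply: subset_leq_card; apply/subsetP => v; rewrite !inE => /submxP [w vw].
  have -> : v = w *m V + (v - w *m V) by rewrite addrC subrK.
  apply: addmx_sub_adds; first exact: submxMl.
  by rewrite sub_kermx mulmxBl vw mulmxA subrr.
rewrite card_sub mul1n leq_exp2l // /R0.
have h1 := mxrank_sum_cap V (kermx Q).
have h2 := mxrank_mul_ker V Q.
have h3 : (\rank (V :&: kermx Q)%MS <= \rank (kermx Q))%N by apply: mxrankS; apply: capmxSr.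
move: h1 h2 h3.
set a := \rank (V + kermx Q)%MS; set b := \rank (V :&: kermx Q)%MS.
set c := \rank V; set d := \rank (kermx Q); set e := \rank (V *m Q).
move=> h1 h2 h3.
lia.
Qed.

Lemma card_up l (V : 'M[F]_(l, m)) :
  #|[set v : 'rV[F]_m | v *m (Q *m V^T) == 0]| = (2 ^ (m - \rank (V *m Q)))%N.
Proof.
have -> : [set v : 'rV[F]_m | v *m (Q *m V^T) == 0] = [set v | (v <= kermx (Q *m V^T))%MS].
  by apply/setP => v; rewrite !inE sub_kermx.
rewrite card_sub mul1n mxrank_ker -mxrank_tr trmx_mul symQ trmxK.
done.
Qed.


Definition Nls l s := #|[set V : 'M[F]_(l, m) | isoQ V && (\rank (V *m Q) == s)]|.
Definition Els l s := (\sum_(i < s) (m - i) + (l - s) * (R0 + s))%N.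

Lemma Nls_big l s : (l < s)%N -> Nls l s = 0%N.
Proof.
move=> ls; apply/eqP; rewrite cards_eq0; apply/eqP/setP => V; rewrite !inE.
apply/negbTE; apply/negP => /andP [_ /eqP r]; move: (rank_leq_row (V *m Q)); by rewrite r leqNgt ls.
Qed.

Lemma iso_col l (v : 'rV[F]_m) (V : 'M[F]_(l, m)) :
  isoQ (col_mx v V) -> isoQ V /\ v *m (Q *m V^T) = 0.
Proof.
rewrite /isoQ mul_col_mx tr_col_mx mul_col_row -block_mx0 => /eqP/eq_block_mx [_ h _ h'].
by rewrite h' mulmxA h.
Qed.

Lemma step_bound l s (v : 'rV[F]_m) (V : 'M[F]_(l, m)) :
  ((isoQ (col_mx v V) && (\rank (col_mx v V *m Q) == s) : nat) <=
   ((0 < s) && isoQ V && (\rank (V *m Q) == s.-1) && (v *m (Q *m V^T) == 0%R) : nat) +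
   (isoQ V && (\rank (V *m Q) == s) && (v *m Q <= V *m Q)%MS : nat))%N.
Proof.
case isoW: (isoQ (col_mx v V)) => //=.
case: (iso_col isoW) => -> vz /=.
rewrite mul_col_mx vz eqxx andbT.
case svV: (v *m Q <= V *m Q)%MS.
  by rewrite rank_col_sub // !andbT leq_addl.
rewrite rank_col_nsub ?svV //= andbF addn0.
by case: s => [|s] //=; rewrite eqSS.
Qed.


Lemma sum_cond_card (T : finType) (c : bool) (P : pred T) :
  (\sum_x ((c && P x) : nat) = c * #|[set x | P x]|)%N.
Proof. by rewrite card_setE big_distrr; apply: eq_bigr => x _; case: c; case: (P x). Qed.

Lemma N_step l s :
  (Nls l.+1 s <= (0 < s) * (Nls l s.-1 * 2 ^ (m - s.-1)) + Nls l s * 2 ^ (R0 + s))%N.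
Proof.
rewrite /Nls card_setE.
rewrite (sum_col_split (fun W : 'M[F]_(1 + l, m) => (isoQ W && (\rank (W *m Q) == s) : nat))).
apply: leq_trans; first by apply: leq_sum => v _; apply: leq_sum => V _; exact: step_bound.
rewrite exchange_big /=.
under eq_bigr => V _ do rewrite big_split /= sum_cond_card.
rewrite big_split /=; apply: leq_add.
  under eq_bigr => V _ do rewrite card_up.
  apply: leq_trans (_ : \sum_(V : 'M[F]_(l, m)) ((0 < s) && isoQ V && (\rank (V *m Q) == s.-1)) * 2 ^ (m - s.-1) <= _)%N.
    apply: leq_sum => V _; case: (_ && _ && _) / andP => [[_ /eqP ->]|] //.
  rewrite -big_distrl /=; under eq_bigr => V _ do rewrite -andbA.
  by rewrite (sum_cond_card (0 < s)%N (fun V : 'M[F]_(l, m) => isoQ V && (\rank (V *m Q) == s.-1))) mulnA.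
rewrite card_setE big_distrl /=; apply: leq_sum => V _.
rewrite sum_cond_card; case: (_ && _) / andP => [[_ /eqP <-]|]; last by [].
rewrite /nat_of_bool mul1n. have h := card_stay V. apply: leq_trans h _. exact: (eq_leq (esym (mul1n _))).
Qed.

Lemma Els_up l s : (Els l s + (m - s) <= Els l.+1 s.+1)%N.
Proof.
rewrite /Els big_ord_recr /= subSS.
set X := (\sum_(i < s) (m - i))%N.
rewrite -addnA [((l - s) * _ + _)%N]addnC addnA leq_add2l.
by rewrite leq_mul2l addnS ltnW ?orbT.
Qed.

Lemma Els_stay l s : (s <= l)%N -> (Els l s + (R0 + s) = Els l.+1 s)%N.
Proof.
move=> sl; rewrite /Els -addnA; congr (_ + _)%N.
by rewrite subSn // mulSn addnC.
Qed.

Lemma N_bound l s : (Nls l s <= 2 ^ l * 2 ^ (Els l s))%N.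
Proof.
elim: l s => [|l IH] s.
  apply: leq_trans (_ : #|[set: 'M[F]_(0, m)]| <= _)%N.
    by apply: subset_leq_card; apply/subsetP => x; rewrite inE.
  by rewrite cardsT card_mx cardF mul0n expn0 mul1n expn_gt0.
apply: leq_trans (N_step l s) _.
case: s => [|s].
  rewrite mul0n add0n addn0.
  apply: leq_trans (_ : 2 ^ l * 2 ^ Els l 0 * 2 ^ R0 <= _)%N.
    by rewrite leq_mul2r IH orbT.
  rewrite -mulnA -expnD -[R0]addn0 (Els_stay (leq0n l)) expnS -mulnA.
  by rewrite leq_pmull.
rewrite /= expnS mul2n -addnn mulnDl; apply: leq_add.
  rewrite mul1n; apply: leq_trans (_ : 2 ^ l * 2 ^ Els l s * 2 ^ (m - s) <= _)%N.
    by rewrite leq_mul2r IH orbT.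
  by rewrite -mulnA -expnD leq_mul2l leq_exp2l // Els_up orbT.
case: (ltnP l s.+1) => ls.
  by rewrite Nls_big.
apply: leq_trans (_ : 2 ^ l * 2 ^ Els l s.+1 * 2 ^ (R0 + s.+1) <= _)%N.
  by rewrite leq_mul2r IH orbT.
by rewrite -mulnA -expnD Els_stay.
Qed.

Lemma Els_max l s : (2 * l <= \rank Q)%N -> (s <= l)%N ->
  (Els l s <= \sum_(i < l) (m - i))%N.
Proof.
move=> lQ sl; rewrite /Els -!(big_mkord xpredT (fun i => m - i)%N).
rewrite (big_cat_nat (leq0n s) sl) /= leq_add2l.
rewrite -sum_nat_const_nat big_nat_cond [X in (_ <= X)%N]big_nat_cond.
apply: leq_sum => i /andP [/andP [si il] _].
have hR : R0 = (m - \rank Q)%N by rewrite /R0 mxrank_ker.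
have hQ : (\rank Q <= m)%N by apply: rank_leq_row.
rewrite hR; lia.
Qed.

Lemma iso_cover l :
  (#|[set V : 'M[F]_(l, m) | isoQ V]| <= \sum_(s < l.+1) Nls l s)%N.
Proof.
rewrite card_setE /Nls.
under [X in (_ <= X)%N]eq_bigr => s _ do rewrite card_setE.
rewrite exchange_big /=; apply: leq_sum => V _.
case iV: (isoQ V) => //=.
have rl : (\rank (V *m Q) < l.+1)%N by rewrite ltnS rank_leq_row.
rewrite (bigD1 (Ordinal rl)) //= eqxx.
by rewrite leq_addr.
Qed.

Lemma iso_count l : (2 * l <= \rank Q)%N ->
  (#|[set V : 'M[F]_(l, m) | isoQ V]| <= l.+1 * (2 ^ l * 2 ^ (\sum_(i < l) (m - i))))%N.
Proof.
move=> lQ; apply: leq_trans (iso_cover l) _.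
apply: leq_trans (_ : \sum_(s < l.+1) (2 ^ l * 2 ^ (\sum_(i < l) (m - i))) <= _)%N.
  apply: leq_sum => s _; apply: leq_trans (N_bound l s) _.
  rewrite leq_mul2l leq_exp2l // Els_max //; first by rewrite orbT. by rewrite -ltnS ltn_ord.
by rewrite big_const_ord iter_addn_0 mulnC.
Qed.

End Iso.

Section Symp.
Variable n : nat.

Definition Jm : 'M[F]_(n + n) := block_mx 0 1%:M 1%:M 0.

Lemma Jm_tr : Jm^T = Jm.
Proof. by rewrite /Jm tr_block_mx !trmx0 trmx1. Qed.

Lemma Jm_J : Jm *m Jm = 1%:M.
Proof.
rewrite /Jm mulmx_block ?mul0mx ?mulmx0 ?mul1mx ?mulmx1 ?addr0 ?add0r.
by rewrite scalar_mx_block.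
Qed.

Lemma Jm_free : row_free Jm.
Proof. by apply/row_freeP; exists Jm; exact: Jm_J. Qed.

Lemma iso_J (A : 'M[F]_(n + n, n)) : isotropic A -> A^T *m Jm *m A = 0.
Proof.
move=> /forallP isoA.
have e : A^T *m Jm *m A = (dsubmx A)^T *m usubmx A + (usubmx A)^T *m dsubmx A.
  rewrite -{1 2}[A]vsubmxK tr_col_mx /Jm mul_row_block ?mulmx0 ?mulmx1 ?addr0 ?add0r.
  by rewrite mul_row_col.
apply/matrixP => i j.
move: (isoA i) => /forallP /(_ j) /eqP.
rewrite /sympl => h; rewrite [RHS]mxE -h e.
rewrite !mxE -big_split /=; apply: eq_bigr => t _.
rewrite !mxE.
by rewrite addrC mulrC [_ * A _ j]mulrC.
Qed.

Lemma lagr (A : 'M[F]_(n + n, n)) l (W : 'M[F]_(l, n + n)) :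
  \rank A = n -> A^T *m Jm *m A = 0 -> W *m A = 0 -> W *m Jm *m W^T = 0.
Proof.
move=> rA iA WA.
have s1 : (A^T *m Jm <= kermx A)%MS by rewrite sub_kermx iA.
have r1 : \rank (A^T *m Jm) = n by rewrite mxrankMfree ?Jm_free // mxrank_tr.
have r2 : \rank (kermx A) = n by rewrite mxrank_ker rA addnK.
have s2 : (kermx A <= A^T *m Jm)%MS.
  by rewrite -(mxrank_leqif_sup s1) r1 r2.
have : (W <= A^T *m Jm)%MS by apply: submx_trans s2; rewrite sub_kermx WA.
case/submxP => X ->.
rewrite trmx_mul trmx_mul Jm_tr trmxK.
rewrite -!mulmxA (mulmxA Jm Jm) Jm_J mul1mx.
by rewrite (mulmxA A^T) (mulmxA (A^T *m Jm)) iA mul0mx mulmx0.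
Qed.

End Symp.

Lemma card_diff m p l (U : 'M[F]_(p, m)) (T : 'M[F]_(l, m)) :
  row_free T -> (T <= U)%MS -> (l < \rank U)%N ->
  (2 ^ (\rank U).-1 <= #|[set v : 'rV[F]_m | (v <= U)%MS && ~~ (v <= T)%MS]|)%N.
Proof.
move=> fT TU lU.
have -> : [set v : 'rV[F]_m | (v <= U)%MS && ~~ (v <= T)%MS] =
   [set v : 'rV[F]_m | (v <= U)%MS] :\: [set v : 'rV[F]_m | (v <= T)%MS].
  by apply/setP => v; rewrite !inE andbC.
rewrite cardsD.
have -> : [set v : 'rV[F]_m | (v <= U)%MS] :&: [set v | (v <= T)%MS] = [set v | (v <= T)%MS].
  apply/setIidPr/subsetP => v; rewrite !inE => vT; exact: submx_trans vT TU.
rewrite !card_sub !mul1n (eqP fT).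
move: lU; case: (\rank U) => [|D] //= lD.
rewrite expnS mul2n -addnn -addnBA; last by rewrite leq_exp2l.
exact: leq_addr.
Qed.

Lemma free_count m p (U : 'M[F]_(p, m)) l : (l <= \rank U)%N ->
  (2 ^ (l * (\rank U).-1) <= #|[set T : 'M[F]_(l, m) | row_free T && (T <= U)%MS]|)%N.
Proof.
elim: l => [|l IH] lU.
  rewrite mul0n expn0 card_gt0; apply/set0Pn; exists 0; rewrite inE sub0mx andbT.
  by rewrite /row_free -leqn0 rank_leq_row.
rewrite card_setE.
rewrite (sum_col_split (fun W : 'M[F]_(1 + l, m) => (row_free W && (W <= U)%MS : nat))).
apply: leq_trans (_ : 2 ^ (l * (\rank U).-1) * 2 ^ (\rank U).-1 <= _)%N.
  by rewrite -expnD mulSn addnC.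
apply: leq_trans (_ : \sum_(T : 'M[F]_(l, m)) ((row_free T && (T <= U)%MS) : nat) * 2 ^ (\rank U).-1 <= _)%N.
  rewrite -big_distrl /= leq_mul2r -card_setE IH ?orbT //; exact: ltnW.
rewrite exchange_big /=; apply: leq_sum => T _.
case fTU: (row_free T && (T <= U)%MS); last by rewrite mul0n.
case/andP: fTU => fT TU; rewrite mul1n.
apply: leq_trans (card_diff fT TU lU) _.
rewrite card_setE; apply: leq_sum => v _.
case vs: ((v <= U)%MS && ~~ (v <= T)%MS) => //.
case/andP: vs => vU vT.
by rewrite /row_free rank_col_nsub // (eqP fT) eqxx col_mx_sub vU TU.
Qed.

Section Main.
Variables (m n : nat) (B : 'M[F]_(m, n + n)).

Definition Qm := B *m Jm n *m B^T.

Lemma Qm_sym : Qm^T = Qm.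
Proof. by rewrite /Qm !trmx_mul trmxK Jm_tr mulmxA. Qed.

Definition Img := [set B *m A | A in IsoFR n].

Lemma img_iso M l (T : 'M[F]_(l, m)) : M \in Img -> T *m M = 0 -> isoQ Qm T.
Proof.
case/imsetP => A; rewrite inE => /andP [/eqP rA isA] -> TBA.
have := lagr rA (iso_J isA) (_ : (T *m B) *m A = 0).
rewrite -mulmxA TBA => /(_ erefl) h.
by rewrite /isoQ /Qm -h trmx_mul !mulmxA.
Qed.

Lemma img_trivial : (#|Img| <= 2 ^ (n * \rank B))%N.
Proof.
apply: leq_trans (_ : #|[set X^T | X in [set X : 'M[F]_(n, m) | (X <= B^T)%MS]]| <= _)%N.
  apply: subset_leq_card; apply/subsetP => M /imsetP [A _ ->].
  apply/imsetP; exists (A^T *m B^T); last by rewrite -trmx_mul trmxK.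
  by rewrite inE submxMl.
by rewrite card_imset ?card_sub ?mxrank_tr //; exact: trmx_inj.
Qed.

Lemma img_count l : (l <= m - n)%N -> (2 * l <= \rank Qm)%N ->
  (#|Img| * 2 ^ (l * (m - n).-1) <=
   l.+1 * (2 ^ l * 2 ^ (\sum_(i < l) (m - i))) * 2 ^ (n * (m - l)))%N.
Proof.
move=> lmn lQ.
rewrite -sum_nat_const.
apply: leq_trans (_ : \sum_(M in Img) #|[set T : 'M[F]_(l, m) | row_free T && (T <= kermx M)%MS]| <= _)%N.
  apply: leq_sum => M MI.
  have rM : (\rank M <= n)%N by apply: rank_leq_col.
  have rk : (l <= \rank (kermx M))%N by rewrite mxrank_ker; lia.
  apply: leq_trans (free_count rk).
  rewrite leq_exp2l // leq_mul2l mxrank_ker; apply/orP; right; move: rM; set r := \rank M; lia.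
under eq_bigr => M _ do rewrite card_setE.
rewrite exchange_big /=.
apply: leq_trans (_ : \sum_(T : 'M[F]_(l, m)) ((row_free T && isoQ Qm T) : nat) * 2 ^ (n * (m - l)) <= _)%N.
  apply: leq_sum => T _.
  case fT: (row_free T) => /=; last by rewrite big1.
  case iT: (isoQ Qm T) => /=.
    have -> : (n * (m - l) = n * (m - \rank T))%N by rewrite (eqP fT).
    rewrite mul1n -(card_ker n T) card_setE.
    rewrite big_mkcond /=; apply: leq_sum => M _.
    by case: (M \in Img) => //; rewrite sub_kermx.
  rewrite big1 // => M MI.
  case TM: (T <= kermx M)%MS => //.
  by move: TM; rewrite sub_kermx => /eqP /(img_iso MI); rewrite iT.
rewrite -big_distrl /= leq_mul2r; apply/orP; right.
apply: leq_trans (iso_count Qm_sym lQ).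
rewrite card_setE; apply: leq_sum => T _.
by case: (row_free T).
Qed.

Lemma Qm_rank : (\rank B + \rank B - (n + n) <= \rank Qm)%N.
Proof.
have h := mxrank_mul_min B (Jm n *m B^T).
have e : \rank (Jm n *m B^T) = \rank B.
  by rewrite (eqmxMfull _ (Jm_free n)) mxrank_tr.
by move: h; rewrite e /Qm -mulmxA.
Qed.

End Main.

Import Order.TTheory.

Lemma ln_le_sub1 (x : R) : 0 < x -> ln x <= x - 1.
Proof.
move=> x0; have := exp_ineq1_le (ln x); rewrite exp_ln; last exact/RltP.
rewrite RplusE => /RleP h; have h2 : 1 + ln x <= x := h; lra.
Qed.

Lemma lnM (x y : R) : 0 < x -> 0 < y -> ln (x * y) = ln x + ln y.
Proof. by move=> /RltP x0 /RltP y0; exact: ln_mult. Qed.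

Lemma lnV (x : R) : 0 < x -> ln x^-1 = - ln x.
Proof. move=> /RltP x0; have := ln_Rinv x x0; rewrite RinvE RoppE; exact. Qed.

Lemma ln_lt (x y : R) : 0 < x -> x < y -> ln x < ln y.
Proof. by move=> /RltP x0 /RltP xy; apply/RltP; apply: ln_increasing. Qed.

Lemma ln_le (x y : R) : 0 < x -> x <= y -> ln x <= ln y.
Proof.
move=> x0; rewrite le_eqVlt => /orP [/eqP -> //|xy].
by apply/ltW/ln_lt.
Qed.

Lemma IZR2 : IZR 2 = 2%:R :> R.
Proof. rewrite -INRE /=. Stdlib.micromega.Lra.lra. Qed.

Lemma ln2_gt0 : 0 < ln (2 : R).
Proof.
have e : ln 1 = 0 :> R by exact: ln_1.
rewrite -e IZR2; apply: ln_lt; [exact: ltr01 | by rewrite ltr1n].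
Qed.

Lemma ln_ge0 (x : R) : 1 <= x -> 0 <= ln x.
Proof. have e : ln 1 = 0 :> R by exact: ln_1. move=> x1; rewrite -e; apply: ln_le => //; lra. Qed.

Section Entropy.
Variables (m n : nat) (B : 'M['F_2]_(m, n + n)).

Local Notation N := #|IsoFR n|.
Local Notation cM M := #|[set A in IsoFR n | B *m A == M]|.
Local Notation Img := [set B *m A | A in IsoFR n].

Lemma sum_cM : (\sum_(M : 'M['F_2]_(m, n)) cM M)%N = N.
Proof.
have e : forall M, cM M = (\sum_A ((A \in IsoFR n) && (B *m A == M) : nat))%N.
  move=> M; rewrite -sum1_card big_mkcond /=; apply: eq_bigr => A _.
  by rewrite inE; case: (_ && _).
rewrite (eq_bigr _ (fun M _ => e M)) exchange_big /=.
rewrite -[RHS]sum1_card [RHS]big_mkcond /=; apply: eq_bigr => A _.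
case: (A \in IsoFR n) => /=; last by rewrite big1.
rewrite (bigD1 (B *m A)) //= eqxx big1 // => M /negbTE.
by rewrite eq_sym => ->.
Qed.

Lemma p_ge0 M : 0 <= prob_BA B M.
Proof. by rewrite /prob_BA divr_ge0 // ler0n. Qed.

Lemma p_img M : prob_BA B M != 0 -> M \in Img.
Proof.
rewrite /prob_BA; case: (cM M =P 0%N) => [->|]; first by rewrite mul0r eqxx.
move=> /eqP; rewrite -lt0n card_gt0 => /set0Pn [A]; rewrite inE => /andP [AI /eqP <-] _.
by apply/imsetP; exists A.
Qed.

Lemma sum_p : (0 < N)%N -> \sum_M prob_BA B M = 1.
Proof.
move=> N0; rewrite /prob_BA -mulr_suml -natr_sum sum_cM divff //.
by rewrite pnatr_eq0 -lt0n.
Qed.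

Lemma entropy_le (K : nat) : (0 < K)%N -> (#|Img| <= K)%N ->
  entropy_BA B <= log2 K%:R.
Proof.
move=> K0 IK.
have L0 := ln2_gt0.
have K0' : (0 : R) < K%:R by rewrite ltr0n.
have lK : 0 <= ln K%:R by apply: ln_ge0; rewrite ler1n.
case: (posnP N) => [N0|Npos].
  rewrite /entropy_BA big1; last first.
    by move=> M _; rewrite /prob_BA N0 invr0 mulr0 eqxx.
  rewrite /log2 divr_ge0 //; exact: ltW.
apply: le_trans (_ : \sum_M (prob_BA B M * log2 K%:R +
     (((M \in Img) : nat)%:R / K%:R - prob_BA B M) / ln 2) <= _).
  apply: ler_sum => M _.
  case: eqP => [->|/eqP pn0].
    rewrite mul0r add0r subr0; apply: divr_ge0; [apply: divr_ge0; [exact: ler0n | exact: ltW] | exact: ltW].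
  have MI := p_img pn0; rewrite MI /=.
  have p0 : 0 < prob_BA B M by rewrite lt0r pn0 p_ge0.
  set p := prob_BA B M.
  have pK : 0 < p * K%:R by rewrite mulr_gt0.
  have pK' : 0 < (p * K%:R)^-1 by rewrite invr_gt0.
  have h := ln_le_sub1 pK'.
  rewrite lnV // lnM // in h.
  have e : p * (p * K%:R)^-1 = K%:R^-1 by field; rewrite pn0 andbT pnatr_eq0 -lt0n K0.
  rewrite /log2.
  have h2 : p * (- (ln p + ln K%:R)) <= K%:R^-1 - p.
    by rewrite -e -[X in _ - X]mulr1 -mulrBr ler_wpM2l // ltW.
  set a := ln p in h2 *; set b := ln K%:R in h2 *; set L := ln 2 in L0 *.
  have -> : - (p * (a / L)) = (- (p * a)) / L by rewrite mulrA mulNr.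
  have -> : p * (b / L) + (1 / K%:R - p) / L = (p * b + (K%:R^-1 - p)) / L.
    by rewrite mulrA -mulrDl div1r.
  rewrite ler_pM2r ?invr_gt0 //.
  move: h2; rewrite mulrN mulrDr; lra.
have eI : \sum_M (((M \in Img) : nat)%:R : R) = #|Img|%:R.
  rewrite -natr_sum; congr (_ %:R); rewrite -[RHS]sum1_card [RHS]big_mkcond /=.
  by apply: eq_bigr => M _; case: (_ \in _).
rewrite big_split /= -mulr_suml sum_p // mul1r.
rewrite -mulr_suml big_split /= -mulr_suml eI sumrN sum_p //.
rewrite gerDl; apply: mulr_le0_ge0; last by rewrite invr_ge0 ltW.
rewrite subr_le0 ler_pdivrMr // mul1r ler_nat //.
Qed.

End Entropy.

Lemma ln_pow2 (k : nat) : ln ((2 ^ k)%N%:R : R) = k%:R * ln (2 : R).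
Proof.
rewrite natrX -IZR2 -RpowE ln_pow; last by apply/RltP; rewrite IZR2 ltr0n.
by rewrite INRE RmultE.
Qed.

Lemma log2_bound (K a b : nat) : (0 < K)%N -> (K * 2 ^ a <= 2 ^ b)%N ->
  log2 K%:R <= b%:R - a%:R.
Proof.
move=> K0 h.
have L0 := ln2_gt0.
have : ln ((K * 2 ^ a)%N%:R : R) <= ln ((2 ^ b)%N%:R : R).
  apply: ln_le; first by rewrite ltr0n muln_gt0 K0 expn_gt0.
  by rewrite ler_nat.
rewrite natrM lnM ?ltr0n ?expn_gt0 // !ln_pow2 => h2.
rewrite /log2 ler_pdivrMr // mulrBl; lra.
Qed.

Lemma sum_sub_id (mm y : nat) : (y <= mm)%N ->
  (2 * \sum_(i < y) (mm - i) + y * y = 2 * y * mm + y)%N.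
Proof.
elim: y => [|y IH] ym; first by rewrite big_ord0.
rewrite big_ord_recr /=.
have := IH (ltnW ym); set S := (\sum_(i < y) (mm - i))%N => e.
nia.
Qed.

End Aux.
Import Aux.

Import Order.TTheory.

Lemma natA (r n mm : nat) : (r <= mm -> r - n <= mm - n)%N.
Proof. lia. Qed.
Lemma natB (r n q : nat) : (r + r - (n + n) <= q -> 2 * (r - n) <= q)%N.
Proof. lia. Qed.
Lemma natC (r n mm : nat) : (r <= mm -> r - n <= mm)%N.
Proof. lia. Qed.
Lemma natD (r n mm : nat) : (n < r -> r <= mm -> (mm - n).-1 + 1 + n = mm)%N.
Proof. lia. Qed.

Lemma key (mm n : nat) (B : 'M['F_2]_(mm, n + n)) (c d g : R) :
  0 < g -> c = 1 + 2 * g -> 0 < d -> d * c <= g -> d <= 1 / 3%:R ->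
  12%:R * d <= g ^+ 2 -> 14%:R <= g * n%:R -> c * n%:R <= mm%:R ->
  entropy_BA B <= (1 - d) * (mm * n)%N%:R.
Proof.
move=> g0 ec d0 dc d3 dg gn cn.
have d1 : 0 <= 1 - d by lra.
have n0 : (0 : R) <= n%:R by rewrite ler0n.
have m0 : (0 : R) <= mm%:R by rewrite ler0n.
case: (posnP #|Img B|) => [K0|Kpos].
  have := @entropy_le mm n B 1 erefl; rewrite K0 => /(_ erefl).
  have e : ln 1 = 0 :> R by exact: ln_1.
  rewrite /log2 e mul0r => h; apply: le_trans h _.
  by apply: mulr_ge0 => //; rewrite ler0n.
have hE := @entropy_le mm n B _ Kpos (leqnn _).
apply: le_trans hE _.
set r := \rank B.
have hr2 : (r <= n + n)%N by apply: rank_leq_col.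
have hrm : (r <= mm)%N by apply: rank_leq_row.
case: (boolP (r%:R <= (1 - d) * mm%:R)) => [rA|].
  have := @log2_bound _ 0 (n * r) Kpos; rewrite expn0 muln1 => /(_ (img_trivial B)).
  rewrite subr0 => h; apply: le_trans h _.
  rewrite !natrM mulrA [_ * n%:R]mulrC [(1 - d) * _]mulrC ler_wpM2l //.
  by rewrite mulrC.
rewrite -ltNge => rB.
have h1 : (1 - d) * (c * n%:R) <= (1 - d) * mm%:R by rewrite ler_wpM2l.
have h2 : d * c * n%:R <= g * n%:R by rewrite ler_wpM2r.
have e1 : (1 - d) * (c * n%:R) = c * n%:R - d * c * n%:R by ring.
have e2 : c * n%:R = n%:R + 2%:R * (g * n%:R) by rewrite ec; ring.
have Rnr : (n%:R : R) < r%:R by lra.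
have nr : (n < r)%N by rewrite -(ltr_nat R).
set y := (r - n)%N.
have ym : (y <= mm - n)%N by apply: natA.
have yQ : (2 * y <= \rank (Qm B))%N by apply: natB; exact: Qm_rank.
have hc := img_count ym yQ.
set S := (\sum_(i < y) (mm - i))%N in hc.
have hc2 : (#|Img B| * 2 ^ (y * (mm - n).-1) <= 2 ^ (y + y + S + n * (mm - y)))%N.
  apply: leq_trans hc _.
  rewrite !expnD !mulnA; do 3! (apply: leq_mul => //); exact: ltn_expl.
have hl := log2_bound Kpos hc2.
have ymm : (y <= mm)%N by apply: natC.
have eS : 2%:R * S%:R + y%:R * y%:R = 2%:R * y%:R * mm%:R + y%:R :> R.
  move: (congr1 (fun k => k%:R : R) (@sum_sub_id _ _ ymm)).
  rewrite [in X in X -> _]natrD [in X in X -> _]natrD !natrM; exact.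
have ey : y%:R = r%:R - n%:R :> R by rewrite /y natrB // ltnW.
have emn : ((mm - n).-1)%:R = mm%:R - n%:R - 1 :> R.
  move: (congr1 (fun k => k%:R : R) (@natD _ _ _ nr hrm)); rewrite !natrD => <-; ring.
have emy : ((mm - y)%N)%:R = mm%:R - y%:R :> R by rewrite natrB.
rewrite !natrD !natrM emn emy in hl.
apply: le_trans hl _.
rewrite natrM.
have hr2' : (r%:R : R) <= n%:R + n%:R by rewrite -natrD ler_nat.
set Y := (y%:R : R) in eS ey *.
set N := (n%:R : R) in n0 gn h1 h2 e1 e2 Rnr hr2' *.
set M := (mm%:R : R) in m0 h1 rB cn *.
set rr := (r%:R : R) in rB Rnr ey hr2'.
set Sr := (S%:R : R) in eS *.
have F1 : g * N < Y by lra.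
have F3 : d * M <= 1 / 3%:R * M by rewrite ler_wpM2r.
have F4 : M <= 3%:R * N by lra.
have F5 : d * (M * N) <= d * (3%:R * N * N).
  by apply: ler_wpM2l; [exact: ltW | apply: ler_wpM2r].
have F6 : 12%:R * d * (N * N) <= g ^+ 2 * (N * N) by apply: ler_wpM2r => //; exact: mulr_ge0.
have gN0 : 0 <= g * N by rewrite mulr_ge0 // ltW.
have F7 : (g * N) * (g * N) <= Y * Y by apply: ler_pM => //; exact: ltW.
have F8 : 14%:R * Y <= Y * Y by apply: ler_wpM2r; lra.
lra.
Qed.

Unset Implicit Arguments.
Set Strict Implicit.

Theorem theoremD1 (c : R) (m : nat -> nat) :
  1 < c ->
  (forall n : nat, c * n%:R <= (m n)%:R) ->
  exists d : R, 0 < d /\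
    exists n0 : nat, forall n : nat, (n0 <= n)%N ->
      forall B : 'M['F_2]_(m n, n + n),
        entropy_BA B <= (1 - d) * ((m n) * n)%:R.
Proof.
move=> c1 hm.
pose g := (c - 1) / 2%:R.
have g0 : 0 < g by rewrite /g divr_gt0 // subr_gt0.
have ec : c = 1 + 2%:R * g by rewrite /g; field.
pose t := g / (1 + 2%:R * g).
have den0 : 0 < 1 + 2%:R * g by lra.
have t0 : 0 < t by rewrite /t divr_gt0.
have htc : t * c = g by rewrite /t ec; field; apply/lt0r_neq0.
have tg : t <= g by nra.
have t1 : t <= 1 by nra.
pose d := t * t / 12%:R.
have d0 : 0 < d by rewrite /d divr_gt0 // mulr_gt0.
have ed : 12%:R * d = t * t by rewrite /d; field.
exists d; split => //.
pose x := 14%:R / g.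
have x0 : 0 <= x by rewrite /x divr_ge0 // ltW.
exists (Num.Def.archi_bound x) => n n0 B.
have hx := archi_boundP x0.
have hn : x <= n%:R.
  apply: le_trans (ltW hx) _; by rewrite ler_nat.
apply: key (ec) _ _ _ _ _ (hm n) => //.
- nra.
- nra.
- rewrite ed expr2; nra.
- have : g * x = 14%:R by rewrite /x; field; apply/lt0r_neq0.
  nra.
Qed.
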